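(* For $q\in\{4,5\}$, the natural action of $\mathrm{PGL}_2(\mathbb{F}_q)$ on the projective line $\mathbb{P}^1(\mathbb{F}_q)$ cannot be sequenced.
   Context: $\mathrm{PGL}_2(\mathbb{F}_q)$ is the quotient of $\mathrm{GL}_2(\mathbb{F}_q)$ by the nonzero scalar matrices; it acts on $\mathbb{P}^1(\mathbb{F}_q)=\mathbb{F}_q\cup\{\infty\}$ by fractional linear transformations $z\mapsto (az+b)/(cz+d)$, and this action is sharply $3$-transitive (for any two ordered triples of distinct points there is exactly one group element mapping the first to the second). For a group $G$ acting sharply $k$-transitively on an $n$-element set $X$, a sequencing of $X$ is an enumeration $(x_1,\ldots,x_n)$ of all elements of $X$ such that the $n-k$ tuples $(x_1,\ldots,x_{k+1}),\ldots,(x_{n-k},\ldots,x_n)$ lie in pairwise distinct orbits of $G$ acting coordinatewise on ordered $(k+1)$-tuples of distinct elements of $X$. Here $n=q+1$ and $k=3$. *)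

(* Defs.v *)
From HB Require Import structures.
From mathcomp Require Import all_boot all_order all_algebra all_field.
Set Implicit Arguments. Unset Strict Implicit. Unset Printing Implicit Defensive.
Import GRing.Theory.
Local Open Scope ring_scope.

(* The projective line P^1(F) = F ∪ {∞} is modelled as [option F],
   with [None] standing for the point at infinity ∞. *)
Definition P1 (F : finFieldType) := option F.

(* This is the action of the
   class of the matrix [[a,b],[c,d]] (when ad - bc != 0) in PGL_2(F). *)
Definition mobius (F : finFieldType) (a b c d : F) (z : option F) : option F :=
  match z with
  | Some x => if c * x + d == 0 then None else Some ((a * x + b) / (c * x + d))
  | None => if c == 0 then None else Some (a / c)
  end.

(* Elements of PGL_2(F) are represented by
   invertible matrices [[a,b],[c,d]]; scalar multiples act identically. *)
Definition PGL2_same_orbit (F : finFieldType) (u v : seq (option F)) : Prop :=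
  exists a b c d : F, a * d - b * c != 0 /\ map (mobius a b c d) u = v.

(* The (k+1)-tuple (x_{i+1}, ..., x_{i+k+1}) of consecutive entries of s
   (0-based start index i). *)
Definition window (T : Type) (k i : nat) (s : seq T) : seq T :=
  take k.+1 (drop i s).

Definition PGL2_sequencing (F : finFieldType) (s : seq (option F)) : Prop :=
  [/\ uniq s, size s = #|{: option F}|%N &
      forall i j : nat, (i < j)%N -> (j + 3 < size s)%N ->
        ~ PGL2_same_orbit (window 3 i s) (window 3 j s)].

(* Main.v *)
Require Import Defs.
From mathcomp Require Import all_boot all_order all_algebra all_field.
From mathcomp Require Import ring.
Set Implicit Arguments. Unset Strict Implicit. Unset Printing Implicit Defensive.
Import GRing.Theory.

Fixpoint mapeq (f : option nat -> option nat) (u v : seq (option nat)) : bool :=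
  match u, v with
  | x :: u', y :: v' => if f x == y then mapeq f u' v' else false
  | [::], [::] => true
  | _, _ => false
  end.

Lemma mapeqP f u v : mapeq f u v = (map f u == v).
Proof.
elim: u v => [|x u IH] [|y v] //=.
by rewrite IH eqseq_cons; case: (f x == y).
Qed.

Definition mobn (addt mult : nat -> nat -> nat) (invt : nat -> nat) (a b c d : nat)
  (z : option nat) : option nat :=
  match z with
  | Some x => let den := addt (mult c x) d in
     if den == 0 then None else Some (mult (addt (mult a x) b) (invt den))
  | None => if c == 0 then None else Some (mult a (invt c))
  end.

Definition orbt q addt mult invt (u v : seq (option nat)) :=
  let r := iota 0 q in
  has (fun a => has (fun b => has (fun c => has (fun d =>
     if mapeq (mobn addt mult invt a b c d) u v then mult a d != mult b c else false) r) r) r) r.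

Definition good q addt mult invt (prs : seq (nat * nat)) (s : seq (option nat)) :=
  has (fun p => orbt q addt mult invt (window 3 p.1 s) (window 3 p.2 s)) prs.

Definition Pts q : seq (option nat) := None :: map Some (iota 0 q).

Definition add5 i j := (i + j) %% 5.
Definition mul5 i j := (i * j) %% 5.
Definition inv5 i := nth 0 [:: 0; 1; 3; 2; 4] i.
Definition add4 i j := ((i %% 2 + j %% 2) %% 2) + 2 * ((i %/ 2 + j %/ 2) %% 2).
Definition mul4 i j := let i0 := i %% 2 in let i1 := i %/ 2 in
   let j0 := j %% 2 in let j1 := j %/ 2 in
   ((i0 * j0 + i1 * j1) %% 2) + 2 * ((i0 * j1 + i1 * j0 + i1 * j1) %% 2).
Definition inv4 i := nth 0 [:: 0; 1; 3; 2] i.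

Lemma check5 : all (good 5 add5 mul5 inv5 [:: (0,1); (0,2); (1,2)]) (permutations (Pts 5)).
Proof. vm_compute. reflexivity. Qed.
Lemma check4 : all (good 4 add4 mul4 inv4 [:: (0,1)]) (permutations (Pts 4)).
Proof. vm_compute. reflexivity. Qed.

Lemma all2P (q : nat) (P : nat -> nat -> bool) :
  all (fun i => all (fun j => P i j) (iota 0 q)) (iota 0 q) ->
  forall i j, i < q -> j < q -> P i j.
Proof.
move=> /allP H i j iq jq.
have Hi := H i; rewrite mem_iota iq in Hi.
by move: (Hi isT) => /allP; apply; rewrite mem_iota jq.
Qed.

Lemma all1P (q : nat) (P : nat -> bool) :
  all P (iota 0 q) -> forall i, i < q -> P i.
Proof. by move=> /allP H i iq; apply: H; rewrite mem_iota. Qed.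

Section Transfer.
Variables (F : finFieldType) (q : nat) (e : nat -> F) (addt mult : nat -> nat -> nat)
  (invt : nat -> nat).
Local Open Scope ring_scope.
Hypotheses (q0 : (0 < q)%N) (sizeF : #|F| = q) (e0 : e 0 = 0) (e1 : e 1 = 1)
  (einj : forall i j, (i < q)%N -> (j < q)%N -> e i = e j -> i = j)
  (addR : forall i j, (i < q)%N -> (j < q)%N -> (addt i j < q)%N)
  (addE : forall i j, (i < q)%N -> (j < q)%N -> e (addt i j) = e i + e j)
  (mulR : forall i j, (i < q)%N -> (j < q)%N -> (mult i j < q)%N)
  (mulE : forall i j, (i < q)%N -> (j < q)%N -> e (mult i j) = e i * e j)
  (invR : forall i, (i < q)%N -> (invt i < q)%N)
  (inv0 : invt 0 = 0%N)
  (invM : forall i, (0 < i < q)%N -> mult i (invt i) = 1%N).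

Lemma e_eq0 k : (k < q)%N -> (e k == 0) = (k == 0%N).
Proof.
move=> kq; apply/eqP/eqP => [|->//]; rewrite -e0 => /einj; exact.
Qed.

Lemma invE i : (i < q)%N -> e (invt i) = (e i)^-1.
Proof.
move=> iq; case: (posnP i) => [->|ip]; first by rewrite inv0 e0 invr0.
have ne : e i != 0 by rewrite e_eq0 // -lt0n.
have := mulE iq (invR iq); rewrite invM ?ip // e1 => h.
by rewrite -[LHS](mulKf ne) -h mulr1.
Qed.

Definition inr (z : option nat) := if z is Some x then (x < q)%N else true.

Lemma mobnP a b c d z : (a < q)%N -> (b < q)%N -> (c < q)%N -> (d < q)%N -> inr z ->
  omap e (mobn addt mult invt a b c d z) = mobius (e a) (e b) (e c) (e d) (omap e z).
Proof.
move=> aq bq cq dq; case: z => [x|] /= xq.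
  have dnq : (addt (mult c x) d < q)%N by apply: addR => //; apply: mulR.
  rewrite -(mulE cq xq) -(addE (mulR cq xq) dq) e_eq0 //.
  case: eqP => // _ /=.
  have axq := mulR aq xq; have abq := addR axq bq; have iq := invR dnq.
  by rewrite (mulE abq iq) (invE dnq) (addE axq bq) (mulE aq xq) (addE (mulR cq xq) dq) (mulE cq xq).
rewrite e_eq0 //; case: eqP => // _ /=.
by rewrite (mulE aq (invR cq)) (invE cq).
Qed.

Definition fF (x : F) : nat := index x (map e (iota 0 q)).

Lemma fFP x : (fF x < q)%N /\ e (fF x) = x.
Proof.
set l := map e (iota 0 q).
have ul : uniq l.
  rewrite map_inj_in_uniq ?iota_uniq // => i j; rewrite !mem_iota /= => iq jq.
  exact: einj.
have sl : size l = q by rewrite size_map size_iota.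
have xl : x \in l.
  have E : #|l| = #|predT : pred F| by rewrite (card_uniqP ul) sl.
  by have := subset_cardP E (subset_predT _) x; rewrite inE => ->.
have fq : (fF x < q)%N by rewrite /fF -/l -[X in (_ < X)%N]sl index_mem.
split=> //.
have := nth_index 0 xl; rewrite /l (nth_map 0%N) ?size_iota // nth_iota //.
Qed.

Lemma transfer (prs : seq (nat * nat)) :
  all (fun p => (p.1 < p.2)%N && (p.2 + 3 < q.+1)%N) prs ->
  all (good q addt mult invt prs) (permutations (Pts q)) ->
  ~ exists s : seq (option F), PGL2_sequencing s.
Proof.
move=> /allP prsP /allP chk [s [us ss hs]].
set s' := map (omap fF) s.
have es : map (omap e) s' = s.
  rewrite -map_comp -[RHS]map_id; apply: eq_map => -[x|] //=.
  by rewrite (proj2 (fFP x)).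
have us' : uniq s' by apply: (@map_uniq _ _ (omap e)); rewrite es.
have sub : {subset s' <= Pts q}.
  move=> z /mapP [[x|] _ ->] //=; rewrite inE /= (mem_map (@Some_inj _)) mem_iota.
  by rewrite (proj1 (fFP x)).
have le : (size (Pts q) <= size s')%N.
  by rewrite size_map ss card_option sizeF /= size_map size_iota.
have [_ eqi] := uniq_min_size us' sub le.
have uP : uniq (Pts q).
  rewrite /= map_inj_uniq ?iota_uniq ?andbT; last exact: Some_inj.
  by apply/mapP => -[].
clearbody s'.
have : s' \in permutations (Pts q) by rewrite mem_permutations uniq_perm.
move=> /chk /hasP [[i j] /prsP /andP [ij jq]] /=.
move=> /hasP [a]; rewrite mem_iota /= => aq.
move=> /hasP [b]; rewrite mem_iota /= => bq.
move=> /hasP [c]; rewrite mem_iota /= => cq.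
move=> /hasP [d]; rewrite mem_iota /= => dq.
rewrite mapeqP; case: eqP => // Hm Hdet.
have sz : (j + 3 < size s)%N by rewrite ss card_option sizeF.
apply: (hs i j ij sz); exists (e a), (e b), (e c), (e d); split.
  rewrite subr_eq0 -!mulE //; apply/eqP => /einj H.
  by move: Hdet; rewrite H ?eqxx //; apply: mulR.
rewrite -es /window -!map_drop -!map_take -/(window 3 j s') -Hm -!map_comp -/(window 3 i s').
apply/eq_in_map => z zw /=.
rewrite mobnP //.
have : z \in s' by move: zw => /mem_take /mem_drop.
by move=> /sub; rewrite inE => /orP [/eqP -> //| /mapP [y]]; rewrite mem_iota => /andP [_ ?] ->.
Qed.

End Transfer.

Local Open Scope ring_scope.

Lemma case5 (F : finFieldType) : #|F| = 5%N -> ~ exists s : seq (option F), PGL2_sequencing s.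
Proof.
move=> H5.
have ch : (5 \in [pchar F])%N by apply: (@card_finPcharP F 5 1) => //; rewrite H5.
have nat5 n : (n%:R : F) = (n %% 5)%:R.
  by rewrite {1}(divn_eq n 5) natrD natrM (pcharf0 ch) mulr0 add0r.
have nz k : (0 < k < 5)%N -> (k%:R : F) != 0.
  move=> /andP[k0 k5]; rewrite -(dvdn_pcharf ch); apply/negP => /(dvdn_leq k0).
  by rewrite leqNgt k5.
apply: (@transfer F 5 (fun i => i%:R) add5 mul5 inv5 _ _ _ _ _ _ _ _ _ _ _ _ [:: (0,1); (0,2); (1,2)]%N).
- by [].
- exact: H5.
- by [].
- by [].
- move=> i j iq jq /= E; case: (ltngtP i j) => // h.
    suff : (j - i)%:R != 0 :> F by rewrite natrB ?(ltnW h) // E subrr eqxx.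
    by apply: nz; rewrite subn_gt0 h /=; exact: leq_ltn_trans (leq_subr _ _) jq.
  suff : (i - j)%:R != 0 :> F by rewrite natrB ?(ltnW h) // E subrr eqxx.
  by apply: nz; rewrite subn_gt0 h /=; exact: leq_ltn_trans (leq_subr _ _) iq.
- by move=> i j _ _; rewrite /add5 ltn_pmod.
- by move=> i j _ _ /=; rewrite /add5 -nat5 natrD.
- by move=> i j _ _; rewrite /mul5 ltn_pmod.
- by move=> i j _ _ /=; rewrite /mul5 -nat5 natrM.
- exact: (@all1P 5 (fun i => (inv5 i < 5)%N) isT).
- by [].
- move=> i /andP[i0 i5].
  have := @all1P 5 (fun i => (0 < i)%N ==> (mul5 i (inv5 i) == 1%N)) isT i i5.
  by rewrite i0 => /eqP.
- by [].
- exact: check5.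
Qed.

Lemma case4 (F : finFieldType) : #|F| = 4%N -> ~ exists s : seq (option F), PGL2_sequencing s.
Proof.
move=> H4.
have ch : (2 \in [pchar F])%N by apply: (@card_finPcharP F 2 2) => //; rewrite H4.
have two : (1 + 1 : F) = 0 by move: (pcharf0 ch); rewrite mulr2n.
have nat2 n : (n%:R : F) = (n %% 2)%:R.
  by rewrite {1}(divn_eq n 2) natrD natrM (pcharf0 ch) mulr0 add0r.
have [w /andP [w0 w1]] : exists w : F, (w != 0) && (w != 1).
  case: (pickP (fun x : F => (x != 0) && (x != 1))) => [w Hw|H]; first by exists w.
  have : (#|F| <= #|[set (0 : F)%R; (1 : F)%R]|)%N.
    apply: subset_leq_card; apply/subsetP => x _; rewrite !inE.
    by move: (H x) => /negbT; rewrite negb_and !negbK.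
  by rewrite H4 cards2; case: (_ != _).
have w3 : w ^+ 3 = 1.
  have h4 : w ^+ 4 = w by rewrite -H4 expf_card.
  have : w * (w ^+ 3 - 1) = 0.
    by transitivity (w ^+ 4 - w); [ring | rewrite h4 subrr].
  by move/eqP; rewrite mulf_eq0 (negbTE w0) /= subr_eq0 => /eqP.
have wq : w * w + w + 1 = 0.
  have : (w - 1) * (w * w + w + 1) = 0.
    by transitivity (w ^+ 3 - 1); [ring | rewrite w3 subrr].
  by move/eqP; rewrite mulf_eq0 subr_eq0 (negbTE w1) /= => /eqP.
have ww : w * w = 1 + w.
  apply/eqP; rewrite -subr_eq0; apply/eqP.
  transitivity ((w * w + w + 1) - (1 + 1) * (1 + w)); first ring.
  by rewrite wq two mul0r subr0.
have eqE a b c d : (a %% 2 = c %% 2)%N -> (b %% 2 = d %% 2)%N ->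
    a%:R + b%:R * w = c%:R + d%:R * w.
  by move=> h1 h2; rewrite (nat2 a) (nat2 b) (nat2 c) (nat2 d) h1 h2.
have addF a b c d : (a%:R + b%:R * w) + (c%:R + d%:R * w) = (a + c)%:R + (b + d)%:R * w.
  by rewrite !natrD; ring.
have mulF a b c d : (a%:R + b%:R * w) * (c%:R + d%:R * w) =
    (a * c + b * d)%:R + (a * d + b * c + b * d)%:R * w.
  apply/eqP; rewrite -subr_eq0; apply/eqP.
  transitivity (b%:R * d%:R * (w * w - (1 + w))); first by rewrite !natrD !natrM; ring.
  by rewrite ww subrr mulr0.
pose e i : F := (i %% 2)%:R + (i %/ 2)%:R * w.
have chk := @all2P 4 (fun i j =>
  [&& ((add4 i j %% 2) %% 2 == (i %% 2 + j %% 2) %% 2)%N,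
      ((add4 i j %/ 2) %% 2 == (i %/ 2 + j %/ 2) %% 2)%N,
      (add4 i j < 4)%N,
      ((mul4 i j %% 2) %% 2 == (i %% 2 * (j %% 2) + i %/ 2 * (j %/ 2)) %% 2)%N,
      ((mul4 i j %/ 2) %% 2 == (i %% 2 * (j %/ 2) + i %/ 2 * (j %% 2) + i %/ 2 * (j %/ 2)) %% 2)%N,
      (mul4 i j < 4)%N &
      ((add4 i j == 0) ==> (i == j))%N]) isT.
have addE i j : (i < 4)%N -> (j < 4)%N -> e (add4 i j) = e i + e j.
  move=> iq jq; have /and3P [/eqP h1 /eqP h2 _] := chk i j iq jq.
  by rewrite /e addF; apply: eqE.
have enz k : (k < 4)%N -> e k = 0 -> k = 0%N.
  case: k => [//|[|[|[|//]]]] _; rewrite /e.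
  - by rewrite (_ : 1 %% 2 = 1)%N // (_ : 1 %/ 2 = 0)%N // mul0r addr0 => /eqP; rewrite oner_eq0.
  - by rewrite (_ : 2 %% 2 = 0)%N // (_ : 2 %/ 2 = 1)%N // mul1r add0r => /eqP; rewrite (negbTE w0).
  - rewrite (_ : 3 %% 2 = 1)%N // (_ : 3 %/ 2 = 1)%N // mul1r => h.
    have : w - 1 = 0 by transitivity ((1 + w) - (1 + 1)); [ring | rewrite h two subrr].
    by move/eqP; rewrite subr_eq0 (negbTE w1).
apply: (@transfer F 4 e add4 mul4 inv4 _ _ _ _ _ _ _ _ _ _ _ _ [:: (0,1)]%N).
- by [].
- exact: H4.
- by rewrite /e mul0r addr0.
- by rewrite /e (_ : 1 %% 2 = 1)%N // (_ : 1 %/ 2 = 0)%N // mul0r addr0.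
- move=> i j iq jq E.
  have : e (add4 i j) = 0 by rewrite addE // E -mulr2n -mulr_natl -[2%:R]/(1 + 1 : F) two mul0r.
  have aq : (add4 i j < 4)%N by have /and3P [_ _ /and3P [? _ _]] := chk i j iq jq.
  move=> /(enz _ aq) h; have /and3P [_ _ /and3P [_ _ /and3P [_ _ /implyP imp]]] := chk i j iq jq.
  by apply/eqP; apply: imp; rewrite h.
- by move=> i j iq jq; have /and3P [_ _ /and3P [? _ _]] := chk i j iq jq.
- exact: addE.
- by move=> i j iq jq; have /and3P [_ _ /and3P [_ _ /and3P [_ ? _]]] := chk i j iq jq.
- move=> i j iq jq; have /and3P [_ _ /and3P [_ /eqP h1 /and3P [/eqP h2 _ _]]] := chk i j iq jq.
  by rewrite /e mulF; apply: eqE.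
- exact: (@all1P 4 (fun i => (inv4 i < 4)%N) isT).
- by [].
- move=> i /andP[i0 i4].
  have := @all1P 4 (fun i => (0 < i)%N ==> (mul4 i (inv4 i) == 1%N)) isT i i4.
  by rewrite i0 => /eqP.
- by [].
- exact: check4.
Qed.

Theorem mainTheorem5 (F : finFieldType) :
  (#|F| = 4 \/ #|F| = 5)%N -> ~ exists s : seq (option F), PGL2_sequencing s.
Proof.
by case=> H; [exact: case4 | exact: case5].
Qed.
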